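(* Let $b\geq2$ and even, $k\leq n-2$ and $\mathbf s=s_1s_2\ldots s_k$. If $\mathbf t$ is the last sequence in $\mathbf s\,|\,R_n(b)$ when this set is listed in co-Reflected Gray Code Order, then $\mathbf t$ has one of the following forms: 1. $\mathbf t=\mathbf sM0\ldots0$ if $U_{k+1}$ is even and $M$ is even, 2. $\mathbf t=\mathbf sM(M+1)0\ldots0$ if $U_{k+1}$ is even and $M$ is odd, 3. $\mathbf t=\mathbf s0\ldots0$ if $U_{k+1}$ is odd, where $M=\min\{b,\max\{s_i\}_{i=1}^k+1\}$ and $U_{k+1}=\sum_{i=1}^k[s_i\neq0 \text{ and } s_i \text{ is even}]$.
   Context: A restricted growth function of length $n$ is an integer sequence $s_1s_2\ldots s_n$ with $s_1=0$ and $0\leq s_{i+1}\leq \max\{s_j\}_{j=1}^i+1$ for $1\leq i\leq n-1$; $R_n$ is the set of these, and for $b\geq1$, $R_n(b)=\{s_1\ldots s_n\in R_n : \max\{s_i\}_{i=1}^n\leq b\}$. For a sequence $\mathbf u$, $\mathbf u\,|\,S$ denotes the subset of $S$ of sequences having prefix $\mathbf u$. The co-Reflected Gray Code Order on $\{0,1,\ldots,m-1\}^n$ ($m\geq2$) is defined by: $s_1\ldots s_n$ is less than $t_1\ldots t_n$ if, for the position $k$ with $s_i=t_i$ ($1\leq i\leq k-1$) and $s_k\neq t_k$, either $U_k$ is even and $s_k<t_k$, or $U_k$ is odd and $s_k>t_k$, where $U_k=|\{i\in\{1,\ldots,k-1\}: s_i\neq0,\ s_i \text{ even}\}|$. $[P]$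 denotes the Iverson bracket (1 if $P$ is true, 0 otherwise). *)

(* Defs.v *)
From mathcomp Require Import all_boot.
Set Implicit Arguments. Unset Strict Implicit. Unset Printing Implicit Defensive.

(* Positions are 0-based in Rocq: s_i (1-based) is nth 0 s (i-1). *)

Definition seqmax (s : seq nat) : nat := foldr maxn 0 s.

Fixpoint rgf_tail (m : nat) (s : seq nat) : bool :=
  match s with
  | [::] => true
  | x :: s' => (x <= m.+1) && rgf_tail (maxn m x) s'
  end.

(* restricted growth function: s_1 = 0 and s_{i+1} <= max(s_1..s_i) + 1 *)
Definition is_rgf (s : seq nat) : bool :=
  match s with
  | [::] => false
  | x :: s' => (x == 0) && rgf_tail x s'
  end.

Definition in_Rnb (n b : nat) (s : seq nat) : Prop :=
  size s = n /\ is_rgf s /\ seqmax s <= b.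

Definition Ucount (p : seq nat) : nat :=
  count (fun x => (x != 0) && ~~ odd x) p.

Definition coRGC_lt (s t : seq nat) : Prop :=
  size s = size t /\
  exists k, [/\ k < size s, take k s = take k t, nth 0 s k != nth 0 t k &
    if ~~ odd (Ucount (take k s)) then nth 0 s k < nth 0 t k
    else nth 0 t k < nth 0 s k].

Definition last_in_prefix_class (n b : nat) (s t : seq nat) : Prop :=
  [/\ in_Rnb n b t, take (size s) t = s &
    forall t', in_Rnb n b t' -> take (size s) t' = s -> t' <> t -> coRGC_lt t' t].

(* Main.v *)
Require Import Defs.
From mathcomp Require Import all_boot.
From mathcomp Require Import zify.
Arguments seqmax : simpl never.

Lemma seqmax_cons x t : seqmax (x :: t) = maxn x (seqmax t).
Proof. by []. Qed.

Lemma seqmax_cat a c : seqmax (a ++ c) = maxn (seqmax a) (seqmax c).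
Proof. elim: a => [|x a IH] /=; first by rewrite max0n. by rewrite !seqmax_cons IH maxnA. Qed.

Lemma seqmax_nseq m : seqmax (nseq m 0) = 0.
Proof. by elim: m => [|m IH] //; rewrite /= seqmax_cons IH. Qed.

Lemma nth_le_seqmax t j : nth 0 t j <= seqmax t.
Proof.
elim: t j => [|x t IH] [|j] //=; rewrite seqmax_cons ?leq_maxl //.
exact: leq_trans (IH j) (leq_maxr _ _).
Qed.

Lemma rgf_tail_cat m a c :
  rgf_tail m (a ++ c) = rgf_tail m a && rgf_tail (maxn m (seqmax a)) c.
Proof.
elim: a m => [|x a IH] m /=; first by rewrite maxn0.
by rewrite IH seqmax_cons maxnA andbA.
Qed.

Lemma rgf_tail_nseq m k : rgf_tail m (nseq k 0) = true.
Proof. by elim: k m => [|k IH] m //=; rewrite IH. Qed.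

Lemma rgf_tail_bound m s j : rgf_tail m s -> j < size s ->
  nth 0 s j <= (maxn m (seqmax (take j s))).+1.
Proof.
elim: s m j => [|x s IH] m j //= /andP [Hx Ht].
case: j => [|j] /=; first by rewrite maxn0.
move=> Hj; rewrite seqmax_cons maxnA; exact: IH.
Qed.

Lemma rgf_bound t j : is_rgf t -> j < size t -> nth 0 t j <= (seqmax (take j t)).+1.
Proof.
case: t => [|x t] //= /andP [/eqP -> Ht].
case: j => [|j] //= Hj. rewrite seqmax_cons. exact: rgf_tail_bound.
Qed.

Lemma first_diff (x y : seq nat) : size x = size y -> x <> y ->
  exists j, [/\ j < size x, take j x = take j y & nth 0 x j != nth 0 y j].
Proof.
elim: x y => [|a x IH] [|c y] //= [] Hs Hne.
case: (eqVneq a c) => [Eac|Nac].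
  subst c. have Hxy : x <> y by move=> E; apply: Hne; rewrite E.
  have [j [H1 H2 H3]] := IH y Hs Hxy.
  by exists j.+1; split => //=; rewrite H2.
by exists 0; split.
Qed.

Lemma coRGC_asym x y : coRGC_lt x y -> coRGC_lt y x -> False.
Proof.
move=> [Hs [j1 [H1 T1 N1 C1]]] [_ [j2 [H2 T2 N2 C2]]].
have key : forall a b i1 i2, i1 < i2 -> take i2 a = take i2 b ->
   nth 0 a i1 != nth 0 b i1 -> False.
  move=> a b i1 i2 lt E N.
  by move: N; rewrite -(nth_take _ lt) E (nth_take _ lt) eqxx.
case: (ltngtP j1 j2) => [lt|lt|eq].
- exact: key lt (esym T2) N1.
- exact: key lt (esym T1) N2.
- subst j2. move: C2; rewrite -T1.
  case: ifP C1 => _ C1 C2; lia.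
Qed.

Lemma coRGC_cat s r' r j : size r' = size r -> j < size r ->
  take j r' = take j r -> nth 0 r' j != nth 0 r j ->
  (if ~~ odd (Ucount s + Ucount (take j r')) then nth 0 r' j < nth 0 r j
   else nth 0 r j < nth 0 r' j) ->
  coRGC_lt (s ++ r') (s ++ r).
Proof.
move=> Hs Hj T N C; split; first by rewrite !size_cat Hs.
exists (size s + j); split.
- by rewrite size_cat Hs ltn_add2l.
- by rewrite !take_cat ltnNge leq_addr /= addKn T.
- by rewrite !nth_cat ltnNge leq_addr /= addKn.
- rewrite take_cat !nth_cat ltnNge leq_addr /= addKn /Ucount count_cat.
  exact: C.
Qed.

Lemma is_rgf_cat s r : s != [::] -> is_rgf (s ++ r) = is_rgf s && rgf_tail (seqmax s) r.
Proof. by case: s => [|x s] //= _; rewrite rgf_tail_cat andbA seqmax_cons. Qed.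

Lemma Ucount_nseq m : Ucount (nseq m 0) = 0.
Proof. by elim: m. Qed.

Lemma finish n b s t r : last_in_prefix_class n b s t -> in_Rnb n b (s ++ r) ->
  (forall r', in_Rnb n b (s ++ r') -> r' <> r -> coRGC_lt (s ++ r') (s ++ r)) ->
  t = s ++ r.
Proof.
move=> [Ht Hp Hl] Hc Hmax.
have Et : t = s ++ drop (size s) t by rewrite -{1}(cat_take_drop (size s) t) Hp.
case: (eqVneq t (s ++ r)) => [//|/eqP Ne]; exfalso.
have L1 := Hl (s ++ r) Hc (take_size_cat _ (erefl _)) (fun E => Ne (esym E)).
have Nr : drop (size s) t <> r by move=> E; apply: Ne; rewrite Et E.
have L2 := Hmax _ (eq_ind _ (in_Rnb n b) Ht _ Et) Nr.
rewrite -Et in L2; exact: coRGC_asym L1 L2.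
Qed.

Lemma bound_r n b s r' j : s != [::] -> in_Rnb n b (s ++ r') -> j < size r' ->
  nth 0 r' j <= b /\ nth 0 r' j <= (seqmax (s ++ take j r')).+1.
Proof.
move=> Hs [Hsz [Hr Hm]] Hj; split.
  apply: leq_trans Hm; have := nth_le_seqmax (s ++ r') (size s + j).
  by rewrite nth_cat ltnNge leq_addr /= addKn.
have := @rgf_bound _ (size s + j) Hr.
have e : (size s + j < size s) = false by rewrite ltnNge leq_addr.
rewrite size_cat ltn_add2l nth_cat take_cat e addKn; exact.
Qed.

Theorem proposition3 (b n : nat) (s t : seq nat) :
  2 <= b -> ~~ odd b ->
  1 <= size s -> size s <= n - 2 ->
  last_in_prefix_class n b s t ->
  let k := size s in
  let M := minn b (seqmax s).+1 in
  if ~~ odd (Ucount s) then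
    (if ~~ odd M then t = s ++ M :: nseq (n - k - 1) 0
     else t = s ++ M :: M.+1 :: nseq (n - k - 2) 0)
  else t = s ++ nseq (n - k) 0.
Proof.
move=> b2 bev k1 kn H; cbv zeta.
have Hs0 : s != [::] by case: s k1 {kn H}.
have [[Hsz [Hr Hm]] Hp _] := H.
have Et : t = s ++ drop (size s) t by rewrite -{1}(cat_take_drop (size s) t) Hp.
have Hrs : is_rgf s by move: Hr; rewrite Et is_rgf_cat // => /andP [].
have Hms : seqmax s <= b.
  by move: Hm; rewrite Et seqmax_cat; apply: leq_trans; apply: leq_maxl.
set m := seqmax s in Hms *.
set M := minn b m.+1.
have HM : M <= b /\ M <= m.+1 by rewrite /M; split; [apply: geq_minl | apply: geq_minr].
have szr : forall r', in_Rnb n b (s ++ r') -> size r' = n - size s.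
  by move=> r' [E _]; rewrite -E size_cat addKn.
have val : forall r, size r = n - size s -> rgf_tail m r -> seqmax r <= b ->
    in_Rnb n b (s ++ r).
  move=> r Sr Tr Mr; split; first by rewrite size_cat Sr; lia.
  by rewrite is_rgf_cat // Hrs Tr seqmax_cat geq_max Hms Mr.
case: ifP => HU.
- case: ifP => HMo.
  +
    apply: (@finish n b s t (M :: nseq (n - size s - 1) 0) H).
      apply: val => /=; first by rewrite size_nseq; lia.
        by rewrite rgf_tail_nseq andbT; case: HM.
      by rewrite seqmax_cons seqmax_nseq maxn0; case: HM.
    move=> r' Hr' Ne.
    have Sr' := szr _ Hr'.
    have Sz : size r' = size (M :: nseq (n - size s - 1) 0).
      by rewrite /= size_nseq Sr'; lia.
    have [j [Hj Tj Nj]] := @first_diff _ _ Sz Ne.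
    have [B1 B2] := @bound_r _ _ _ _ _ Hs0 Hr' Hj.
    have Hj' := Hj; rewrite Sz in Hj'.
    apply: (@coRGC_cat s r' _ j Sz Hj' Tj Nj).
    clear Hj'; case: j Hj Tj Nj B1 B2 => [|j] Hj Tj Nj B1 B2.
      rewrite take0 /= addn0 HU; move: B2; rewrite take0 cats0 -/m => B2.
      move: Nj => /= /eqP Nj; case: HM => HM1 HM2; lia.
    rewrite Tj /= take_nseq; last by lia.
    have -> : (M != 0) = true by apply/eqP; rewrite /M; lia.
    move: Nj => /=; rewrite !nth_nseq !if_same HMo Ucount_nseq addn0 addn1 /= HU /= lt0n; exact.
  + have [EM mb] : M = m.+1 /\ m.+1 < b.
      move: HMo; rewrite /M /minn; case: ltnP => h HMo; first by rewrite bev in HMo.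
      case: (eqVneq m.+1 b) => e; first by rewrite e bev in HMo.
      split => //; lia.
    have Hmo : odd m = false by move: HMo; rewrite EM /= negbK => ->.
    rewrite EM.
    apply: (@finish n b s t (m.+1 :: m.+2 :: nseq (n - size s - 2) 0) H).
      apply: val => /=; first by rewrite size_nseq; lia.
        by rewrite rgf_tail_nseq leqnn /= andbT; lia.
      by rewrite !seqmax_cons seqmax_nseq; lia.
    move=> r' Hr' Ne.
    have Sr' := szr _ Hr'.
    have Sz : size r' = size (m.+1 :: m.+2 :: nseq (n - size s - 2) 0).
      by rewrite /= size_nseq Sr'; lia.
    have [j [Hj Tj Nj]] := @first_diff _ _ Sz Ne.
    have [B1 B2] := @bound_r _ _ _ _ _ Hs0 Hr' Hj.
    have Hj' := Hj; rewrite Sz in Hj'.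
    apply: (@coRGC_cat s r' _ j Sz Hj' Tj Nj).
    clear Hj'; case: j Hj Tj Nj B1 B2 => [|[|j]] Hj Tj Nj B1 B2.
    * rewrite take0 /= addn0 HU; move: B2; rewrite take0 cats0 -/m => B2.
      move: Nj => /= /eqP Nj; lia.
    * rewrite Tj /= ?take0 /= Hmo /= ?addn0 HU.
      move: B2; rewrite Tj /= ?take0 seqmax_cat !seqmax_cons -/m => B2.
      have e0 : seqmax [::] = 0 by [].
      move: B2; rewrite e0 => B2.
      move: Nj => /= /eqP Nj; lia.
    * rewrite Tj /= take_nseq; last by lia.
      move: Nj => /=; rewrite !nth_nseq !if_same Hmo Ucount_nseq /= add0n addn0 addn1 /= HU /= lt0n; exact.
- apply: (@finish n b s t (nseq (n - size s) 0) H).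
    apply: val => /=; first by rewrite size_nseq.
      by rewrite rgf_tail_nseq.
    by rewrite seqmax_nseq.
  move=> r' Hr' Ne.
  have Sr' := szr _ Hr'.
  have Sz : size r' = size (nseq (n - size s) 0) by rewrite size_nseq.
  have [j [Hj Tj Nj]] := @first_diff _ _ Sz Ne.
  have Hj' := Hj; rewrite Sz in Hj'.
  apply: (@coRGC_cat s r' _ j Sz Hj' Tj Nj).
  rewrite Tj take_nseq; last by rewrite size_nseq in Sz; lia.
  move: Nj; rewrite Ucount_nseq addn0 HU !nth_nseq !if_same lt0n; exact.
Qed.
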